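(* Let $G$ be a finite solvable group of derived length $\ell \geq 1$, and let $f : \mathbb{Z}_{\geq 1} \to \mathbb{R}$ be a function such that $ab_k(G) \leq f(k)$ for all $k \geq 1$. Then $|G| \leq F(\ell, f)$ for some quantity $F(\ell,f)$ depending only on $\ell$ and $f$ (and not on $G$).
   Context: For a group $G$, $G' = [G,G]$ is the commutator subgroup, and the abelianization growth is $ab_k(G) = \sup\{ |H : H'| : H \leqslant G, \ |G:H| \leq k\}$. *)

(* Defs.v *)
From mathcomp Require Import all_boot all_fingroup all_solvable.
From Stdlib Require Import Reals.
Set Implicit Arguments. Unset Strict Implicit. Unset Printing Implicit Defensive.
Local Open Scope group_scope.

Definition derived_length (gT : finGroupType) (G : {set gT}) (l : nat) : bool :=
  (G^`(l) == 1) && [forall n : 'I_l, G^`(n) != 1].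

(* ab_k(G) = sup { |H : H'| : H <= G, |G : H| <= k } (a max over a finite,
   nonempty (for k >= 1, H = G) family). *)
Definition ab_k (gT : finGroupType) (G : {group gT}) (k : nat) : nat :=
  \max_(H : {group gT} | (H \subset G) && (#|G : H| <= k)%N) #|H : H^`(1)|.

(* Main.v *)
Require Import Defs.
From mathcomp Require Import all_boot all_fingroup all_solvable.
From Stdlib Require Import Reals.
From Stdlib Require Lia.

Local Open Scope group_scope.

Lemma der1_derg (gT : finGroupType) (G : {set gT}) n :
  (G^`(1))^`(n) = G^`(n.+1).
Proof. by elim: n => [|n IH] //; rewrite dergSn IH. Qed.

Lemma key l : forall g : nat -> nat, exists N : nat,
  forall (gT : finGroupType) (G : {group gT}), G^`(l) == 1 ->
    (forall k : nat, leq 1 k -> leq (ab_k G k) (g k)) -> leq #|G| N.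
Proof.
elim: l => [|l IH] g.
  exists (S O) => gT G /eqP; rewrite derg0 => -> _; by rewrite cards1.
pose m := g (S O).
have [N HN] := IH (fun k : nat => g (muln m k)).
exists (muln m N) => gT G Hl Hab.
have HG1 : leq #|G : G^`(1)| m.
  apply: leq_trans (Hab (S O) isT).
  rewrite /ab_k.
  apply: (@leq_bigmax_cond _ _ (fun H : {group gT} => #|H : H^`(1)|) G).
  by rewrite subxx indexgg.
have Hm : leq (S O) m by apply: leq_trans HG1; apply: indexg_gt0.
have HD : leq #|G^`(1)%G| N.
  apply: HN.
    by rewrite /= der1_derg.
  move=> k Hk; apply: leq_trans (Hab (muln m k) _); last by rewrite muln_gt0 Hm.
  rewrite /ab_k.
  apply/bigmax_leqP => H /andP [sH iH].
  apply: (@leq_bigmax_cond _ _ (fun H : {group gT} => #|H : H^`(1)|) H).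
  rewrite (subset_trans sH (der_sub 1 G)) /=.
  rewrite -(Lagrange_index (der_sub 1 G) sH).
  by apply: leq_mul.
rewrite -(Lagrange (der_sub 1 G)) mulnC.
by apply: leq_mul.
Qed.

Theorem mainTheorem4 :
  forall (l : nat) (f : nat -> R), (1 <= l)%N ->
  exists F : R,
    forall (gT : finGroupType) (G : {group gT}),
      solvable G -> derived_length G l ->
      (forall k : nat, (1 <= k)%N -> (INR (ab_k G k) <= f k)%R) ->
      (INR #|G| <= F)%R.
Proof.
move=> l f _.
have [N HN] := key l (fun k : nat => Z.to_nat (up (f k))).
exists (INR N) => gT G _ /andP [Hl _] Hf.
apply: le_INR; apply/leP; apply: HN => // k Hk.
have H1 := Hf k Hk.
have [H2 _] := archimed (f k).
have H3 : (INR (ab_k G k) < IZR (up (f k)))%R by apply: Rle_lt_trans H1 H2.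
rewrite INR_IZR_INZ in H3.
have H4 := lt_IZR _ _ H3.
apply/leP; Lia.lia.
Qed.
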